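(* Let $\mathcal{X}\subseteq\mathbb{R}^n$, let $f=(f_1,\dots,f_m):\mathcal{X}\to\mathbb{R}^m$, let $\alpha\in\mathbb{R}^m$, and define \[ \mathcal{F}=\{f(x)\mid x\in\mathcal{X}\},\qquad \mathcal{G}=\Bigl\{\frac{f(x)}{\sum_{i=1}^m\alpha_if_i(x)}\Bigm| x\in\mathcal{X}\Bigr\}. \] Assume $\mathcal{F}$ and $\mathcal{G}$ are nonempty and there is $\epsilon>0$ with $\sum_{i=1}^m\alpha_if_i(x)>\epsilon$ for all $x\in\mathcal{X}$. Then: (i) If $\mathcal{F}$ is bounded, then $\operatorname{conv}(\mathcal{G})=\{g\in\mathbb{R}^m\mid \exists\rho\ge0 \text{ with } g\in\rho\operatorname{conv}(\mathcal{F}),\ \alpha^\top g=1\}$. (ii) If $\mathcal{F}$ is bounded and in addition $f_1(x)=1$ for all $x\in\mathcal{X}$, then $\operatorname{conv}(\mathcal{F})=\{f\in\mathbb{R}^m\mid \exists\sigma\ge0\text{ with } f\in\sigma\operatorname{conv}(\mathcal{G}),\ f_1=1\}$. (iii) (Without assuming boundedness of $\mathcal{F}$.) $\operatorname{cl}\operatorname{conv}(\mathcal{G})=\{g\in\mathbb{R}^m\mid\exists\rho\ge0\text{ with } g\in\rho\operatorname{cl}\operatorname{conv}(\mathcal{F}),\ \alpha^\top g=1\}$.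
   Context: For a set $K$ and $\lambda\ge0$: $\lambda K=\{\lambda k\mid k\in K\}$ if $\lambda>0$, and $0K$ denotes the recession cone of $K$. $\operatorname{cl}$ denotes closure and $\operatorname{conv}$ convex hull. *)

(* Defs.v *)
From mathcomp Require Import all_boot all_order all_algebra.
From mathcomp Require Import all_classical all_reals all_analysis.
Set Implicit Arguments. Unset Strict Implicit. Unset Printing Implicit Defensive.
Import Order.TTheory GRing.Theory Num.Theory.
Local Open Scope classical_set_scope.
Local Open Scope ring_scope.

Definition conv_hull (R : realType) (m : nat) (A : set 'rV[R]_m) : set 'rV[R]_m :=
  [set g | exists (k : nat) (l : 'I_k -> R) (v : 'I_k -> 'rV[R]_m),
      (forall i, 0 <= l i) /\ \sum_(i < k) l i = 1 /\
      (forall i, A (v i)) /\ g = \sum_(i < k) l i *: v i].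

Definition rec_cone (R : realType) (m : nat) (K : set 'rV[R]_m) : set 'rV[R]_m :=
  [set d | forall k, K k -> forall t : R, 0 <= t -> K (k + t *: d)].

(* lambda K : dilation for lambda > 0, recession cone for lambda = 0
   (only used with lambda >= 0) *)
Definition scale_set (R : realType) (m : nat) (lam : R) (K : set 'rV[R]_m)
  : set 'rV[R]_m :=
  if 0 < lam then [set lam *: k | k in K] else rec_cone K.

Definition bounded_vecs (R : realType) (m : nat) (A : set 'rV[R]_m) : Prop :=
  exists M : R, forall y, A y -> forall i : 'I_m, `|y 0 i| <= M.

Definition dotv (R : realType) (m : nat) (a y : 'rV[R]_m) : R :=
  \sum_(i < m) a 0 i * y 0 i.

(* Main.v *)
Require Import Defs.
From mathcomp Require Import all_boot all_order all_algebra.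
From mathcomp Require Import all_classical all_reals all_analysis.
From mathcomp Require Import ring lra.
Import Order.TTheory GRing.Theory Num.Theory.
Import numFieldNormedType.Exports.
Local Open Scope classical_set_scope.
Local Open Scope ring_scope.

Lemma dotvD (R : realType) (m : nat) (a x y : 'rV[R]_m) :
  dotv a (x + y) = dotv a x + dotv a y.
Proof. by rewrite /dotv -big_split; apply: eq_bigr => i _; rewrite mxE mulrDr. Qed.

Lemma dotvZ (R : realType) (m : nat) (a x : 'rV[R]_m) (c : R) :
  dotv a (c *: x) = c * dotv a x.
Proof. by rewrite /dotv mulr_sumr; apply: eq_bigr => i _; rewrite mxE mulrCA. Qed.

Lemma dotvN (R : realType) (m : nat) (a x : 'rV[R]_m) :
  dotv a (- x) = - dotv a x.
Proof. by rewrite -scaleN1r dotvZ mulN1r. Qed.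

Lemma dotvB (R : realType) (m : nat) (a x y : 'rV[R]_m) :
  dotv a (x - y) = dotv a x - dotv a y.
Proof. by rewrite dotvD dotvN. Qed.

Lemma dotv_sum (R : realType) (m k : nat) (a : 'rV[R]_m) (l : 'I_k -> R)
  (v : 'I_k -> 'rV[R]_m) :
  dotv a (\sum_(i < k) l i *: v i) = \sum_(i < k) l i * dotv a (v i).
Proof.
rewrite /dotv.
under eq_bigr do rewrite summxE mulr_sumr.
rewrite exchange_big; apply: eq_bigr => i _; rewrite mulr_sumr.
by apply: eq_bigr => j _; rewrite mxE mulrCA.
Qed.

Lemma entry_le_norm (R : realType) (m : nat) (v : 'rV[R]_m) (i : 'I_m) :
  `|v 0 i| <= `|v|.
Proof.
have /mapP[j Hj ->] : `|v 0 i| \in [seq `|v x.1 x.2| | x : 'I_1 * 'I_m].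
  by apply/mapP; exists (0, i) => //=; rewrite mem_enum.
by rewrite [leRHS]/Num.Def.normr /= mx_normrE; apply/bigmax_geP; right => /=; exists j.
Qed.

Lemma dotv_norm (R : realType) (m : nat) (a v : 'rV[R]_m) :
  `|dotv a v| <= (\sum_(i < m) `|a 0 i|) * `|v|.
Proof.
rewrite /dotv mulr_suml; apply: le_trans (ler_norm_sum _ _ _) _.
apply: ler_sum => i _; rewrite normrM; apply: ler_wpM2l => //.
exact: entry_le_norm.
Qed.


Lemma conv_reweight (R : realType) (m k : nat) (A : set 'rV[R]_m)
  (w : 'I_k -> R) (v : 'I_k -> 'rV[R]_m) :
  (forall i, 0 <= w i) -> (forall i, A (v i)) -> 0 < \sum_(i < k) w i ->
  conv_hull A ((\sum_(i < k) w i)^-1 *: \sum_(i < k) w i *: v i).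
Proof.
move=> w0 Av S0; exists k, (fun i => w i / \sum_(i < k) w i), v.
split; first by move=> i; rewrite divr_ge0 // ltW.
split; first by rewrite -mulr_suml mulfV // gt_eqF.
split => //; rewrite scaler_sumr; apply: eq_bigr => i _.
by rewrite scalerA mulrC.
Qed.

Lemma conv_convex (R : realType) (m : nat) (A : set 'rV[R]_m) x y (s : R) :
  conv_hull A x -> conv_hull A y -> 0 <= s -> s <= 1 ->
  conv_hull A ((1 - s) *: x + s *: y).
Proof.
move=> [k1 [l1 [v1 [l10 [l11 [Av1 ->]]]]]] [k2 [l2 [v2 [l20 [l21 [Av2 ->]]]]]] s0 s1.
exists (k1 + k2)%N.
exists (fun i => match fintype.split i with inl a => (1 - s) * l1 a | inr b => s * l2 b end).
exists (fun i => match fintype.split i with inl a => v1 a | inr b => v2 b end).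
split.
  move=> i; case: (fintype.split i) => a; apply: mulr_ge0 => //; by rewrite subr_ge0.
split.
  rewrite big_split_ord /=.
  under eq_bigr do rewrite (unsplitK (inl _)).
  under [X in _ + X]eq_bigr do rewrite (unsplitK (inr _)).
  by rewrite -!mulr_sumr l11 l21 !mulr1 subrK.
split.
  by move=> i; case: (fintype.split i).
rewrite big_split_ord /=.
under [X in _ = X + _]eq_bigr do rewrite (unsplitK (inl _)).
under [X in _ = _ + X]eq_bigr do rewrite (unsplitK (inr _)).
by rewrite !scaler_sumr; congr (_ + _); apply: eq_bigr => i _; rewrite scalerA.
Qed.


Lemma pos_comb (R : realType) (k : nat) (l b : 'I_k -> R) :
  (forall i, 0 <= l i) -> \sum_(i < k) l i = 1 -> (forall i, 0 < b i) ->
  0 < \sum_(i < k) l i * b i.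
Proof.
move=> l0 l1 b0; rewrite lt_def sumr_ge0 ?andbT; last first.
  by move=> i _; rewrite mulr_ge0 // ltW.
apply/eqP => H0.
have H := @psumr_eq0P _ _ xpredT (fun i => l i * b i)
  (fun j _ => mulr_ge0 (l0 j) (ltW (b0 j))) H0.
have : \sum_(i < k) l i = 0.
  apply: big1 => i _; have /eqP := H i isT.
  by rewrite mulf_eq0 (gt_eqF (b0 i)) orbF => /eqP.
by rewrite l1 => /eqP; rewrite oner_eq0.
Qed.

Lemma conv_pos (R : realType) (n m : nat) (X : set 'rV[R]_n)
  (f : 'rV[R]_n -> 'rV[R]_m) (a : 'rV[R]_m) (eps : R) :
  (forall x, X x -> eps < dotv a (f x)) ->
  forall c, conv_hull [set f x | x in X] c -> eps < dotv a c.
Proof.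
move=> he c [k [l [v [l0 [l1 [Av ->]]]]]].
rewrite dotv_sum.
have : 0 < \sum_(i < k) l i * (dotv a (v i) - eps).
  apply: pos_comb => // i; have [x Xx <-] := Av i; by rewrite subr_gt0 he.
under eq_bigr do rewrite mulrBr.
by rewrite sumrB -mulr_suml l1 mul1r subr_gt0.
Qed.
Arguments conv_pos {R n m X f a eps} he {c}.

Lemma conv_scale (R : realType) (n m : nat) (X : set 'rV[R]_n)
  (f : 'rV[R]_n -> 'rV[R]_m) (a : 'rV[R]_m) (eps : R) :
  0 < eps -> (forall x, X x -> eps < dotv a (f x)) ->
  forall c, conv_hull [set f x | x in X] c ->
  conv_hull [set (dotv a (f x))^-1 *: f x | x in X] ((dotv a c)^-1 *: c).
Proof.
move=> e0 he c hc.
have cpos := conv_pos he hc.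
move: hc => [k [l [v [l0 [l1 [Av hcE]]]]]]; subst c.
have vpos i : 0 < dotv a (v i).
  by have [x Xx <-] := Av i; apply: lt_trans (he x Xx).
have := @conv_reweight R m k [set (dotv a (f x))^-1 *: f x | x in X]
  (fun i => l i * dotv a (v i)) (fun i => (dotv a (v i))^-1 *: v i).
rewrite -dotv_sum.
have -> : \sum_(i < k) l i * dotv a (v i) *: ((dotv a (v i))^-1 *: v i)
        = \sum_(i < k) l i *: v i.
  apply: eq_bigr => i _; rewrite scalerA -mulrA mulfV ?mulr1 //.
  by rewrite gt_eqF.
apply.
- by move=> i; rewrite mulr_ge0 // ltW.
- by move=> i; have [x Xx <-] := Av i; exists x.
- exact: lt_trans e0 cpos.
Qed.

Lemma conv_unscale (R : realType) (n m : nat) (X : set 'rV[R]_n)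
  (f : 'rV[R]_n -> 'rV[R]_m) (a : 'rV[R]_m) (eps : R) :
  0 < eps -> (forall x, X x -> eps < dotv a (f x)) ->
  forall g, conv_hull [set (dotv a (f x))^-1 *: f x | x in X] g ->
  dotv a g = 1 /\ exists r c, 0 < r /\ r <= eps^-1 /\
     conv_hull [set f x | x in X] c /\ g = r *: c.
Proof.
move=> e0 he g [k [l [u [l0 [l1 [Gu ->]]]]]].
have [x hx] : {x : 'I_k -> 'rV[R]_n &
    forall i, X (x i) /\ u i = (dotv a (f (x i)))^-1 *: f (x i)}.
  apply: (@choice _ _ (fun i y => X y /\ u i = (dotv a (f y))^-1 *: f y)) => i.
  by have [y Xy <-] := Gu i; exists y.
have dpos i : eps < dotv a (f (x i)) by apply: he; case: (hx i).
have dpos' i : 0 < dotv a (f (x i)) by apply: lt_trans (dpos i).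
split.
  rewrite dotv_sum -[RHS]l1; apply: eq_bigr => i _.
  by rewrite (proj2 (hx i)) dotvZ mulVf ?mulr1 // gt_eqF.
set w := fun i => l i * (dotv a (f (x i)))^-1.
have HS : \sum_(i < k) l i *: u i = \sum_(i < k) w i *: f (x i).
  by apply: eq_bigr => i _; rewrite (proj2 (hx i)) scalerA.
have rpos : 0 < \sum_(i < k) w i.
  by apply: pos_comb => // i; rewrite invr_gt0.
exists (\sum_(i < k) w i), ((\sum_(i < k) w i)^-1 *: \sum_(i < k) w i *: f (x i)).
split => //; split.
  rewrite -[leRHS]mul1r -l1 mulr_suml; apply: ler_sum => i _.
  rewrite /w ler_wpM2l //; rewrite lef_pV2 ?posrE //; exact: ltW.
split.
  apply: conv_reweight => //; last by move=> i; exists (x i) => //; case: (hx i).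
  by move=> i; rewrite mulr_ge0 // ltW // invr_gt0.
by rewrite HS scalerA mulfV ?scale1r // gt_eqF.
Qed.
Arguments conv_scale {R n m X f a eps} e0 he {c}.
Arguments conv_unscale {R n m X f a eps} e0 he {g}.


Lemma rec_bounded0 (R : realType) (m : nat) (K : set 'rV[R]_m) k d :
  bounded_vecs K -> K k -> rec_cone K d -> d = 0.
Proof.
move=> [M hM] Kk hd; apply/rowP => i; rewrite mxE.
have [//|dne] := eqVneq (d 0 i) 0; exfalso.
have dpos : 0 < `|d 0 i| by rewrite normr_gt0.
have Mk : `|k 0 i| <= M by apply: hM.
set t := (M + `|k 0 i| + 1) / `|d 0 i|.
have t0 : 0 <= t.
  rewrite divr_ge0 // addr_ge0 //; apply: addr_ge0 => //; exact: le_trans Mk.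
have := hM _ (hd k Kk t t0) i.
rewrite mxE [X in k 0 i + X]mxE.
have : `|t * d 0 i| - `|k 0 i| <= `|k 0 i + t * d 0 i|.
  by rewrite [X in _ <= `|X|]addrC; apply: lerB_normD.
rewrite normrM (ger0_norm t0) /t mulfVK ?gt_eqF // => H1 H2.
have := le_trans H1 H2; lra.
Qed.

Lemma conv_bounded (R : realType) (m : nat) (A : set 'rV[R]_m) :
  bounded_vecs A -> bounded_vecs (conv_hull A).
Proof.
move=> [M hM]; exists M => y [k [l [v [l0 [l1 [Av ->]]]]]] i.
rewrite summxE; apply: le_trans (ler_norm_sum _ _ _) _.
rewrite -[leRHS]mul1r -l1 mulr_suml; apply: ler_sum => j _.
by rewrite mxE normrM ger0_norm // ler_wpM2l // hM.
Qed.

Arguments rec_bounded0 {R m K k d}.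
Arguments conv_bounded {R m A}.

Lemma conv_self (R : realType) (m : nat) (A : set 'rV[R]_m) v :
  A v -> conv_hull A v.
Proof.
move=> Av; exists 1%N, (fun _ => 1), (fun _ => v).
by rewrite big_ord1 big_ord1 scale1r.
Qed.
Arguments conv_self {R m A v}.

Lemma G_bounded (R : realType) (n m : nat) (X : set 'rV[R]_n)
  (f : 'rV[R]_n -> 'rV[R]_m) (a : 'rV[R]_m) (eps : R) :
  0 < eps -> (forall x, X x -> eps < dotv a (f x)) ->
  bounded_vecs [set f x | x in X] ->
  bounded_vecs [set (dotv a (f x))^-1 *: f x | x in X].
Proof.
move=> e0 he [M hM]; exists (eps^-1 * `|M|) => y [x Xx <-] i.
have dx := he x Xx.
rewrite mxE normrM; apply: ler_pM => //.
  rewrite ger0_norm ?invr_ge0; last exact/ltW/(lt_trans e0).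
  by rewrite lef_pV2 ?posrE //; [exact: ltW | exact: lt_trans dx].
apply: le_trans (ler_norm M); apply: hM; by exists x.
Qed.

Arguments G_bounded {R n m X f a eps}.

Lemma part_i (R : realType) (n m : nat) (X : set 'rV[R]_n)
  (f : 'rV[R]_n -> 'rV[R]_m) (a : 'rV[R]_m) (eps : R) :
  0 < eps -> (forall x, X x -> eps < dotv a (f x)) ->
  [set f x | x in X] !=set0 ->
  bounded_vecs [set f x | x in X] ->
  conv_hull [set (dotv a (f x))^-1 *: f x | x in X] =
  [set g | exists rho : R, 0 <= rho /\
      scale_set rho (conv_hull [set f x | x in X]) g /\ dotv a g = 1].
Proof.
move=> e0 he [y0 Fy0] hb; apply/seteqP; split => g.
  move=> hg; have [Dg [r [c [r0 [re [cF gE]]]]]] := conv_unscale e0 he hg.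
  exists r; split; first exact: ltW.
  split => //; rewrite /scale_set r0; by exists c.
move=> [rho [r0 [hs Dg]]]; move: hs; rewrite /scale_set.
case: ifP => rpos.
  move=> [c cF gE]; subst g.
  move: Dg; rewrite dotvZ => Dg.
  have -> : rho = (dotv a c)^-1.
    apply: (@mulIf _ (dotv a c)); first by rewrite gt_eqF // (lt_trans e0) // (conv_pos he cF).
    by rewrite Dg mulVf // gt_eqF // (lt_trans e0) // (conv_pos he cF).
  by have := conv_scale e0 he cF.
move=> hrec.
have g0 := rec_bounded0 (conv_bounded hb) (conv_self Fy0) hrec.
move: Dg; rewrite g0 /dotv big1; last by move=> i _; rewrite mxE mulr0.
by move/eqP; rewrite eq_sym oner_eq0.
Qed.

Lemma conv_first (R : realType) (n m : nat) (X : set 'rV[R]_n)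
  (f : 'rV[R]_n -> 'rV[R]_m) (o : 'I_m) :
  (forall x, X x -> f x 0 o = 1) ->
  forall c, conv_hull [set f x | x in X] c -> c 0 o = 1.
Proof.
move=> h1 c [k [l [v [l0 [l1 [Av ->]]]]]].
rewrite summxE -[RHS]l1; apply: eq_bigr => i _.
by rewrite mxE; have [x Xx <-] := Av i; rewrite h1 // mulr1.
Qed.
Arguments conv_first {R n m X f o} h1 {c}.

Lemma part_ii (R : realType) (n m : nat) (X : set 'rV[R]_n)
  (f : 'rV[R]_n -> 'rV[R]_m) (a : 'rV[R]_m) (eps : R) (o : 'I_m) :
  0 < eps -> (forall x, X x -> eps < dotv a (f x)) ->
  [set f x | x in X] !=set0 ->
  bounded_vecs [set f x | x in X] ->
  (forall x, X x -> f x 0 o = 1) ->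
  conv_hull [set f x | x in X] = [set p | exists sigma : R, 0 <= sigma /\
     scale_set sigma (conv_hull [set (dotv a (f x))^-1 *: f x | x in X]) p
     /\ p 0 o = 1].
Proof.
move=> e0 he [y0 [x0 Xx0 fx0]] hb h1; apply/seteqP; split => p.
  move=> hp; have pp := conv_pos he hp.
  have pp' : 0 < dotv a p by apply: lt_trans pp.
  exists (dotv a p); split; first exact: ltW.
  split; last by have := conv_first h1 hp.
  rewrite /scale_set pp'; exists ((dotv a p)^-1 *: p).
    by have := conv_scale e0 he hp.
  by rewrite scalerA mulfV ?scale1r // gt_eqF.
move=> [s [s0 [hs p1]]]; move: hs; rewrite /scale_set.
case: ifP => spos.
  move=> [g gG pE].
  have [_ [r [c [r0 [_ [cF gE]]]]]] := conv_unscale e0 he gG.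
  have c1 := conv_first h1 cF.
  move: p1; rewrite -pE gE scalerA mxE c1 mulr1 => sr.
  by rewrite sr scale1r.
move=> hrec.
have GB := conv_bounded (G_bounded e0 he hb).
have Gx0 : conv_hull [set (dotv a (f x))^-1 *: f x | x in X]
   ((dotv a (f x0))^-1 *: f x0) by apply: conv_self; exists x0.
have p0 := rec_bounded0 GB Gx0 hrec.
by move: p1; rewrite p0 mxE => /eqP; rewrite eq_sym oner_eq0.
Qed.


Lemma closure_normP (R : realType) (m : nat) (A : set 'rV[R]_m) p :
  closure A p <-> forall e, 0 < e -> exists a, A a /\ `|p - a| < e.
Proof.
split.
  move=> hcl e e0.
  have nb : nbhs p [set q : 'rV[R]_m | `|p - q| < e].
    by apply (@nbhs_normP R _ p); exists e.
  have [a [Aa ha]] := hcl _ nb.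
  by exists a.
move=> h B nB; have [e e0 hB] := proj1 (@nbhs_normP R _ p B) nB; have [a [Aa ha]] := h e e0.
by exists a; split => //; apply: hB.
Qed.

Arguments closure_normP {R m A p}.

Lemma dotv_cvg (R : realType) (m : nat) (a y : 'rV[R]_m) :
  dotv a x @[x --> y] --> dotv a y.
Proof.
move=> B nB; have [e e0 hB] := proj1 (@nbhs_normP R _ (dotv a y) B) nB.
set A := \sum_(i < m) `|a 0 i|.
have A0 : 0 <= A by apply: sumr_ge0.
apply (@nbhs_normP R _ y); exists (e / (A + 1)); first by rewrite /= divr_gt0 // ltr_wpDl.
move=> t /= ht; apply: hB; rewrite /ball_ /= -dotvB; have H1 := @dotv_norm R m a (y - t); rewrite -/A in H1; apply: (le_lt_trans H1).
apply: (@le_lt_trans _ _ (A * (e / (A + 1)))).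
  by apply: ler_wpM2l => //; apply: ltW.
rewrite mulrA ltr_pdivrMr ?ltr_wpDl //; rewrite mulrDr mulr1 mulrC ltrDl.
exact: e0.
Qed.

Lemma h_cvg (R : realType) (m : nat) (a y : 'rV[R]_m) :
  dotv a y != 0 -> (dotv a x)^-1 *: x @[x --> y] --> (dotv a y)^-1 *: y.
Proof.
move=> Dy.
have H1 := @cvgV R _ (nbhs y) (nbhs_filter y) (dotv a) (dotv a y) Dy (@dotv_cvg R m a y).
have H3 : (fun x : 'rV[R]_m => x) @ nbhs y --> y by exact: cvg_id.
have H2 := @cvgZ R _ _ (nbhs y) (nbhs_filter y) _ _ _ _ H1 H3.
exact: H2.
Qed.

Lemma L1 (R : realType) (n m : nat) (X : set 'rV[R]_n)
  (f : 'rV[R]_n -> 'rV[R]_m) (a : 'rV[R]_m) (eps : R) :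
  0 < eps -> (forall x, X x -> eps < dotv a (f x)) ->
  forall y, closure (conv_hull [set f x | x in X]) y -> 0 < dotv a y ->
  closure (conv_hull [set (dotv a (f x))^-1 *: f x | x in X])
    ((dotv a y)^-1 *: y).
Proof.
move=> e0 he y hy ypos B nB.
have nB' := @h_cvg R m a y (lt0r_neq0 ypos) _ nB.
have [c [cF Bc]] := hy _ nB'.
exists ((dotv a c)^-1 *: c); split => //.
by have := conv_scale e0 he cF.
Qed.
Arguments L1 {R n m X f a eps} e0 he {y}.

Lemma iii_sup (R : realType) (n m : nat) (X : set 'rV[R]_n)
  (f : 'rV[R]_n -> 'rV[R]_m) (a : 'rV[R]_m) (eps : R) :
  0 < eps -> (forall x, X x -> eps < dotv a (f x)) ->
  [set f x | x in X] !=set0 ->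
  forall g, (exists rho : R, 0 <= rho /\
      scale_set rho (closure (conv_hull [set f x | x in X])) g /\ dotv a g = 1) ->
  closure (conv_hull [set (dotv a (f x))^-1 *: f x | x in X]) g.
Proof.
move=> e0 he [y0 Fy0] g [rho [r0 [hs Dg]]]; move: hs; rewrite /scale_set.
case: ifP => rpos.
  move=> [c hc gE]; subst g.
  move: Dg; rewrite dotvZ => Dg.
  have cpos : 0 < dotv a c.
    by rewrite -(@pmulr_rgt0 _ rho) // Dg ltr01.
  have -> : rho = (dotv a c)^-1.
    apply: (@mulIf _ (dotv a c)); first by rewrite gt_eqF.
    by rewrite Dg mulVf // gt_eqF.
  by have := L1 e0 he hc cpos.
move=> hrec.
have y0C : closure (conv_hull [set f x | x in X]) y0.
  by apply: subset_closure; apply: conv_self.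
have a0pos : 0 < dotv a y0.
  by case: Fy0 => x0 Xx0 <-; apply: lt_trans (he x0 Xx0).
apply (proj2 closure_normP) => e epos.
set K := `|y0 - dotv a y0 *: g|.
have K0 : 0 <= K by exact: normr_ge0.
set t := K / (e / 2).
have t0 : 0 <= t by rewrite divr_ge0 // divr_ge0 // ltW.
have ytC := hrec y0 y0C t t0.
have ytpos : 0 < dotv a (y0 + t *: g).
  by rewrite dotvD dotvZ Dg mulr1 ltr_wpDr.
have hC := L1 e0 he ytC ytpos.
have [q [qG hq]] := proj1 closure_normP hC (e / 2) (divr_gt0 epos (ltr0Sn R 1)).
exists q; split => //.
have dz : dotv a y0 + t != 0 by rewrite gt_eqF // ltr_wpDr.
have E : g - (dotv a (y0 + t *: g))^-1 *: (y0 + t *: g) =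
         - ((dotv a y0 + t)^-1 *: (y0 - dotv a y0 *: g)).
  rewrite dotvD dotvZ Dg mulr1.
  apply/rowP => j; rewrite !mxE; field; exact: dz.
have hn : `|g - (dotv a (y0 + t *: g))^-1 *: (y0 + t *: g)| < e / 2.
  rewrite E normrN normrZ ger0_norm; last by rewrite invr_ge0 ltW // ltr_wpDr.
  rewrite -/K mulrC ltr_pdivrMr ?ltr_wpDr //.
  have -> : K = e / 2 * t by rewrite /t mulrC divfK // gt_eqF // divr_gt0.
  rewrite mulrDr.
  have : 0 < e / 2 * dotv a y0 by rewrite mulr_gt0 // divr_gt0.
  lra.
have := le_lt_trans (ler_normD _ _) (ltrD hn hq).
by rewrite addrA subrK -splitr.
Qed.


Lemma closure_dot1 (R : realType) (n m : nat) (X : set 'rV[R]_n)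
  (f : 'rV[R]_n -> 'rV[R]_m) (a : 'rV[R]_m) (eps : R) :
  0 < eps -> (forall x, X x -> eps < dotv a (f x)) ->
  forall g, closure (conv_hull [set (dotv a (f x))^-1 *: f x | x in X]) g ->
  dotv a g = 1.
Proof.
move=> e0 he g hg.
set A := \sum_(i < m) `|a 0 i|.
have A0 : 0 <= A by apply: sumr_ge0.
have [//|dne] := eqVneq (dotv a g) 1; exfalso.
set d := `|dotv a g - 1|.
have dpos : 0 < d by rewrite normr_gt0 subr_eq0.
have [q [qG hq]] := proj1 closure_normP hg (d / (A + 1)) (divr_gt0 dpos (ltr_wpDl A0 ltr01)).
have [Dq _] := conv_unscale e0 he qG.
have H1 : d <= A * `|g - q|.
  by rewrite /d -Dq -dotvB; apply: dotv_norm.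
have H2 : A * `|g - q| <= A * (d / (A + 1)) by apply: ler_wpM2l => //; apply: ltW.
have H3 : A * (d / (A + 1)) < d.
  rewrite mulrA ltr_pdivrMr ?ltr_wpDl //.
  by rewrite mulrDr mulr1 mulrC ltrDl.
have := le_trans H1 H2; lra.
Qed.

Lemma cluster_extract (R : realType) (M : R) (S : R -> set R) :
  (forall e, 0 < e -> S e !=set0) ->
  (forall e1 e2, 0 < e1 -> e1 <= e2 -> S e1 `<=` S e2) ->
  (forall e, 0 < e -> S e `<=` `[0, M]) ->
  exists rho, 0 <= rho /\ rho <= M /\
    forall e eta, 0 < e -> 0 < eta -> exists r, S e r /\ `|rho - r| < eta.
Proof.
move=> Sne Smono Sseg.
have FF : Filter (filter_from [set e : R | 0 < e] S).
  apply: filter_from_filter; first by exists 1 => /=.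
  move=> i j /= i0 j0; exists (Num.min i j) => /=; first by rewrite lt_min i0 j0.
  move=> r Sr; split.
    by apply: Smono Sr; rewrite ?lt_min ?i0 ?j0 // ge_min lexx.
  by apply: Smono Sr; rewrite ?lt_min ?i0 ?j0 // ge_min lexx orbT.
have PF : ProperFilter (filter_from [set e : R | 0 < e] S).
  by apply: filter_from_proper.
have Fseg : filter_from [set e : R | 0 < e] S `[0, M]%classic.
  by exists 1 => //=; apply: Sseg.
have [rho [rseg rcl]] := segment_compact PF Fseg.
move: rseg => /=; rewrite in_itv /= => /andP[r0 rM].
exists rho; split => //; split => // e eta e0 eta0.
have nb : nbhs rho [set r : R | `|rho - r| < eta].
  by apply (@nbhs_normP R _ rho); exists eta.
have [r [Sr hr]] := rcl (S e) _ (ex_intro2 _ _ e e0 (fun x h => h)) nb.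
by exists r.
Qed.

Arguments closure_dot1 {R n m X f a eps} e0 he {g}.

Lemma frac1 (R : realType) (x : R) : 0 <= x -> x / (x + 1) <= 1.
Proof.
move=> x0; rewrite ler_pdivrMr; last by rewrite ltr_wpDl.
by rewrite mul1r lerDl.
Qed.

Lemma iii_sub (R : realType) (n m : nat) (X : set 'rV[R]_n)
  (f : 'rV[R]_n -> 'rV[R]_m) (a : 'rV[R]_m) (eps : R) :
  0 < eps -> (forall x, X x -> eps < dotv a (f x)) ->
  forall g, closure (conv_hull [set (dotv a (f x))^-1 *: f x | x in X]) g ->
  exists rho : R, 0 <= rho /\
      scale_set rho (closure (conv_hull [set f x | x in X])) g /\ dotv a g = 1.
Proof.
move=> e0 he g hg.
set S := fun e : R => [set r : R | exists c, conv_hull [set f x | x in X] c /\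
   0 < r /\ r <= eps^-1 /\ `|g - r *: c| < e].
have Sne : forall e, 0 < e -> S e !=set0.
  move=> e epos; have [q [qG hq]] := proj1 closure_normP hg e epos.
  have [_ [r [c [rpos [re [cF qE]]]]]] := conv_unscale e0 he qG.
  by exists r, c; rewrite -qE.
have Smono : forall e1 e2, 0 < e1 -> e1 <= e2 -> S e1 `<=` S e2.
  move=> e1 e2 _ le12 r [c [cF [rpos [re hc]]]]; exists c; do 3 split => //.
  exact: lt_le_trans le12.
have Sseg : forall e, 0 < e -> S e `<=` `[0, eps^-1]%classic.
  move=> e _ r [c [_ [rpos [re _]]]] /=; rewrite in_itv /=; apply/andP; split => //.
  exact: ltW.
have [rho [r0 [rM hcl]]] := @cluster_extract R _ S Sne Smono Sseg.
exists rho; split => //; split; last exact: (closure_dot1 e0 he hg).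
rewrite /scale_set; case: ifP => rpos.
  exists (rho^-1 *: g); last by rewrite scalerA mulfV ?scale1r // gt_eqF.
  apply (proj2 closure_normP) => e epos.
  set N := `|g|.
  have N0 : 0 <= N by exact: normr_ge0.
  set dl := e * rho / 4.
  set et := Num.min (rho / 2) (e * rho ^+ 2 / (4 * (N + 1))).
  have dl0 : 0 < dl by rewrite /dl divr_gt0 // mulr_gt0.
  have et0 : 0 < et.
    rewrite /et lt_min divr_gt0 //= divr_gt0 ?mulr_gt0 ?exprn_gt0 //.
    by rewrite ltr_wpDl.
  have [r [[c [cF [rpos' [_ hgc]]]] hr]] := hcl dl et dl0 et0.
  exists c; split => //.
  have hr1 : `|rho - r| < rho / 2 by apply: lt_le_trans hr _; rewrite ge_min lexx.
  have hr2 : `|r - rho| <= e * rho ^+ 2 / (4 * (N + 1)).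
    by rewrite distrC; apply/ltW/(lt_le_trans hr); rewrite ge_min lexx orbT.
  have rbig : rho / 2 < r.
    have := ler_norm (rho - r); lra.
  have E : rho^-1 *: g - c = r^-1 *: ((g - r *: c) + (rho^-1 * (r - rho)) *: g).
    apply/rowP => j; rewrite !mxE; field.
    by apply/andP; split; rewrite gt_eqF.
  rewrite E normrZ ger0_norm ?invr_ge0 ?ltW //.
  rewrite mulrC ltr_pdivrMr //.
  apply: le_lt_trans (ler_normD _ _) _.
  rewrite normrZ normrM ger0_norm ?invr_ge0 ?ltW // -/N.
  have T2 : rho^-1 * `|r - rho| * N <= e * rho / 4.
    apply: (@le_trans _ _ (rho^-1 * (e * rho ^+ 2 / (4 * (N + 1))) * N)).
      apply: ler_wpM2r => //; apply: ler_wpM2l => //; by rewrite invr_ge0 ltW.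
    have -> : rho^-1 * (e * rho ^+ 2 / (4 * (N + 1))) * N =
              (e * rho / 4) * (N / (N + 1)).
      field; apply/andP; split; first by rewrite gt_eqF // ltr_wpDl.
      by rewrite gt_eqF.
    apply: ler_piMr; first by rewrite ltW.
    exact: frac1.
  have T3 : e * rho / 2 < e * r.
    by rewrite -mulrA ltr_pM2l.
  rewrite -/dl in hgc.
  have : dl + e * rho / 4 = e * rho / 2 by rewrite /dl; field.
  rewrite -mulrA in T2.
  lra.
have rho0 : rho = 0 by apply/eqP; rewrite eq_le r0 andbT leNgt rpos.
move=> k hk t t0.
apply (proj2 closure_normP) => e epos.
have e30 : 0 < e / 3 by rewrite divr_gt0.
have [k' [k'F hk']] := proj1 closure_normP hk (e / 3) e30.
set N := `|k'|.
have N0 : 0 <= N by exact: normr_ge0.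
have t1 : 0 < t + 1 by rewrite ltr_wpDl.
have N1 : 0 < N + 1 by rewrite ltr_wpDl.
set et := Num.min (1 / (t + 1)) (e / (3 * (t + 1) * (N + 1))).
set dl := e / (3 * (t + 1)).
have dl0 : 0 < dl by rewrite /dl divr_gt0 // mulr_gt0.
have et0 : 0 < et.
  by rewrite /et lt_min divr_gt0 //= divr_gt0 // !mulr_gt0.
have [r [[c [cF [rpos' [_ hgc]]]] hr]] := hcl dl et dl0 et0.
move: hr; rewrite rho0 sub0r normrN ger0_norm ?ltW // => hr.
have hr1 : r <= 1 / (t + 1) by apply/ltW/(lt_le_trans hr); rewrite ge_min lexx.
have hr2 : r <= e / (3 * (t + 1) * (N + 1)).
  by apply/ltW/(lt_le_trans hr); rewrite ge_min lexx orbT.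
set s := t * r.
have s0 : 0 <= s by rewrite mulr_ge0 // ltW.
have s1 : s <= 1.
  apply: (@le_trans _ _ (t * (1 / (t + 1)))); first by apply: ler_wpM2l.
  by rewrite mul1r; exact: frac1.
exists ((1 - s) *: k' + s *: c); split; first exact: conv_convex.
have E : k + t *: g - ((1 - s) *: k' + s *: c) =
         (k - k') + s *: k' + t *: (g - r *: c).
  by apply/rowP => j; rewrite !mxE /s; ring.
rewrite E.
apply: le_lt_trans (ler_normD _ _) _.
apply: (@le_lt_trans _ _ (`|k - k'| + `|s *: k'| + `|t *: (g - r *: c)|)).
  by rewrite lerD2r ler_normD.
rewrite !normrZ (ger0_norm t0) (ger0_norm (ltW rpos')) -/N -/s.
have T1 : s * N <= e / 3.
  apply: (@le_trans _ _ (t * (e / (3 * (t + 1) * (N + 1))) * N)).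
    by apply: ler_wpM2r => //; apply: ler_wpM2l.
  have -> : t * (e / (3 * (t + 1) * (N + 1))) * N =
            (e / 3) * ((t / (t + 1)) * (N / (N + 1))).
    by field; rewrite !gt_eqF.
  apply: ler_piMr; first exact: ltW.
  apply: mulr_ile1; rewrite ?divr_ge0 // ?addr_ge0 //; exact: frac1.
have T2 : t * `|g - r *: c| <= e / 3.
  apply: (@le_trans _ _ (t * dl)); first by apply: ler_wpM2l => //; apply: ltW.
  have -> : t * dl = (e / 3) * (t / (t + 1)) by rewrite /dl; field; rewrite gt_eqF.
  apply: ler_piMr; first exact: ltW.
  exact: frac1.
have : e / 3 + e / 3 + e / 3 = e by field.
lra.
Qed.


Theorem theorem2 (R : realType) (n m : nat) (X : set 'rV[R]_n)
  (f : 'rV[R]_n -> 'rV[R]_m) (alpha : 'rV[R]_m) :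
  let F := [set f x | x in X] in
  let G := [set (dotv alpha (f x))^-1 *: f x | x in X] in
  F !=set0 -> G !=set0 ->
  (exists eps : R, 0 < eps /\ forall x, X x -> eps < dotv alpha (f x)) ->
  (* (i) *)
  (bounded_vecs F ->
     conv_hull G = [set g | exists rho : R, 0 <= rho /\
                      scale_set rho (conv_hull F) g /\ dotv alpha g = 1]) /\
  (* (ii) *)
  (forall hm : (0 < m)%N, bounded_vecs F ->
     (forall x, X x -> f x 0 (Ordinal hm) = 1) ->
     conv_hull F = [set p | exists sigma : R, 0 <= sigma /\
                      scale_set sigma (conv_hull G) p /\ p 0 (Ordinal hm) = 1]) /\
  (* (iii) *)
  closure (conv_hull G) = [set g | exists rho : R, 0 <= rho /\
                      scale_set rho (closure (conv_hull F)) g /\ dotv alpha g = 1].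
Proof.
move=> F G Fne Gne [eps [e0 he]].
split; first by move=> hb; exact: (@part_i R n m X f alpha eps e0 he Fne hb).
split.
  move=> hm hb h1.
  exact: (@part_ii R n m X f alpha eps (Ordinal hm) e0 he Fne hb h1).
apply/seteqP; split => g.
  exact: (@iii_sub R n m X f alpha eps e0 he g).
exact: (@iii_sup R n m X f alpha eps e0 he Fne g).
Qed.
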